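(* Let $\epsilon>0$, $q>0$, and let $\Lambda_\epsilon$ be an $\epsilon$-lattice under the $\ell_2$ norm. For any $\boldsymbol\lambda\in\Lambda_\epsilon$, the expanded Voronoi region $\mathbf{Vor}^+(\boldsymbol\lambda)$ has volume at most $(1+2q)^d\,\mathbf{V}$.
   Context: A lattice is the set of integer combinations of a basis of $\mathbb{R}^d$. Under $\ell_2$, its packing radius $r_p$ is the supremum of $r$ such that balls of radius $r$ around distinct lattice points are disjoint and its cover radius $r_c$ is the infimum of $r$ such that balls of radius $r$ around lattice points cover $\mathbb{R}^d$; an $\epsilon$-lattice has $\epsilon=r_p\le r_c\le3\epsilon$. The Voronoi region of $\boldsymbol\lambda$ is $\mathbf{Vor}(\boldsymbol\lambda)=\{\mathbf{x}\in\mathbb{R}^d:\|\mathbf{x}-\boldsymbol\lambda\|_2<\|\mathbf{x}-\boldsymbol\lambda'\|_2\ \forall\boldsymbol\lambda'\in\Lambda_\epsilon\setminus\{\boldsymbol\lambda\}\}$; all Voronoi regions have a common volume $\mathbf{V}$. The expanded Voronoi region $\mathbf{Vor}^+(\boldsymbol\lambda)$ is the set of points within $\ell_2$ distance $2q\epsilon$ of $\mathbf{Vor}(\boldsymbol\lambda)$. *)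

(* Defs.v *)
From HB Require Import structures.
From mathcomp Require Import all_boot all_order all_algebra.
From mathcomp Require Import all_classical all_reals all_analysis.
Set Implicit Arguments. Unset Strict Implicit. Unset Printing Implicit Defensive.
Import Order.TTheory GRing.Theory Num.Theory.
Local Open Scope classical_set_scope.
Local Open Scope ring_scope.

Section Defs.
Variables (R : realType) (d : nat).

Definition l2norm (x : 'rV[R]_d) : R := Num.sqrt (\sum_(i < d) x ord0 i ^+ 2).

Definition lattice (B : 'M[R]_d) : set 'rV[R]_d :=
  [set map_mx (fun z : int => z%:~R) z *m B | z in [set: 'rV[int]_d]].

Definition packing_radius (L : set 'rV[R]_d) : R :=
  sup [set r : R | 0 <= r /\ forall l l', L l -> L l' -> l <> l' ->
        forall x, ~ (l2norm (x - l) < r /\ l2norm (x - l') < r)].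

Definition cover_radius (L : set 'rV[R]_d) : R :=
  inf [set r : R | 0 <= r /\ forall x, exists2 l, L l & l2norm (x - l) <= r].

Definition eps_lattice (eps : R) (L : set 'rV[R]_d) : Prop :=
  eps = packing_radius L /\ packing_radius L <= cover_radius L /\
  cover_radius L <= 3 * eps.

Definition Vor (L : set 'rV[R]_d) (l : 'rV[R]_d) : set 'rV[R]_d :=
  [set x | forall l', L l' -> l' <> l -> l2norm (x - l) < l2norm (x - l')].

Definition Vor_plus (L : set 'rV[R]_d) (rho : R) (l : 'rV[R]_d) : set 'rV[R]_d :=
  [set x | exists2 y, Vor L l y & l2norm (x - y) <= rho].

(* d-dimensional Lebesgue (outer) measure via countable covers by
   half-open boxes [a, b) *)
Definition box (a b : 'rV[R]_d) : set 'rV[R]_d :=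
  [set x | forall i, a ord0 i <= x ord0 i < b ord0 i].

Definition box_vol (a b : 'rV[R]_d) : R :=
  \prod_(i < d) Num.max (b ord0 i - a ord0 i) 0.

Definition lebesgue_vol (A : set 'rV[R]_d) : \bar R :=
  ereal_inf [set s : \bar R | exists a b : nat -> 'rV[R]_d,
    A `<=` \bigcup_k box (a k) (b k) /\
    s = (\sum_(0 <= k <oo) (box_vol (a k) (b k))%:E)%E].
End Defs.

(* Main.v *)
Require Import Defs.
From HB Require Import structures.
From mathcomp Require Import all_boot all_order all_algebra.
From mathcomp Require Import all_classical all_reals all_analysis.
From mathcomp Require Import ring lra.
Import Order.TTheory GRing.Theory Num.Theory.
Local Open Scope classical_set_scope.
Local Open Scope ring_scope.

Set Implicit Arguments. Unset Strict Implicit.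
Section Aux.
Variables (R : realType) (d : nat).
Implicit Types u v w : 'rV[R]_d.

Definition dot u v : R := \sum_(i < d) u ord0 i * v ord0 i.

Lemma dot_ge0 u : 0 <= dot u u.
Proof. by apply: sumr_ge0 => i _; rewrite -expr2 sqr_ge0. Qed.

Lemma l2normE u : l2norm u = Num.sqrt (dot u u).
Proof. by rewrite /l2norm /dot; congr Num.sqrt; apply: eq_bigr => i _; rewrite expr2. Qed.

Lemma l2norm_ge0 u : 0 <= l2norm u.
Proof. by rewrite l2normE sqrtr_ge0. Qed.

Lemma l2norm_sq u : l2norm u ^+ 2 = dot u u.
Proof. by rewrite l2normE sqr_sqrtr // dot_ge0. Qed.

Lemma dotC u v : dot u v = dot v u.
Proof. by apply: eq_bigr => i _; rewrite mulrC. Qed.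

Lemma dotDl u v w : dot (u + v) w = dot u w + dot v w.
Proof. by rewrite /dot -big_split; apply: eq_bigr => i _; rewrite !mxE mulrDl. Qed.

Lemma dotNl u v : dot (- u) v = - dot u v.
Proof. by rewrite /dot -sumrN; apply: eq_bigr => i _; rewrite !mxE mulNr. Qed.

Lemma dotZl a u v : dot (a *: u) v = a * dot u v.
Proof. by rewrite /dot mulr_sumr; apply: eq_bigr => i _; rewrite !mxE mulrA. Qed.

Lemma dotBl u v w : dot (u - v) w = dot u w - dot v w.
Proof. by rewrite dotDl dotNl. Qed.

Lemma dotBr u v w : dot w (u - v) = dot w u - dot w v.
Proof. by rewrite dotC dotBl ![dot _ w]dotC. Qed.

Lemma dotZr a u v : dot v (a *: u) = a * dot v u.
Proof. by rewrite dotC dotZl dotC. Qed.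

Lemma dot_sqB u v : dot (u - v) (u - v) = dot u u - 2 * dot u v + dot v v.
Proof. rewrite dotBl !dotBr (dotC v u); ring. Qed.

Lemma cauchy_schwarz u v : dot u v <= l2norm u * l2norm v.
Proof.
set A := dot u u; set C := dot u v; set D := dot v v.
have H t : 0 <= A * t ^+ 2 - 2 * t * C + D.
  have := dot_ge0 (t *: u - v); rewrite dot_sqB !dotZl !dotZr -/A -/C -/D.
  by move=> h; apply: (le_trans h); rewrite le_eqVlt; apply/orP; left; apply/eqP; ring.
have A0 : 0 <= A by apply: dot_ge0.
have D0 : 0 <= D by apply: dot_ge0.
have CAD : C ^+ 2 <= A * D.
  have [Ap|] := ltP 0 A.
    have := H (C / A).
    have -> : A * (C / A) ^+ 2 - 2 * (C / A) * C + D = (A * D - C ^+ 2) / A.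
      by field; rewrite gt_eqF.
    by rewrite pmulr_lge0 ?invr_gt0 // subr_ge0.
  move=> A0'; have AE : A = 0 by apply/eqP; rewrite eq_le A0' A0.
  have [->|Cn] := eqVneq C 0; first by rewrite AE expr0n /= mul0r.
  have := H ((D + 1) / (2 * C)).
  have -> : A * ((D + 1) / (2 * C)) ^+ 2 - 2 * ((D + 1) / (2 * C)) * C + D = - 1.
    by rewrite AE; field.
  by move=> h; exfalso; lra.
rewrite !l2normE -sqrtrM //; apply: (le_trans (ler_norm C)).
by rewrite -sqrtr_sqr ler_sqrt // mulr_ge0.
Qed.

Lemma l2norm_lt u v : (l2norm u < l2norm v) = (dot u u < dot v v).
Proof.
rewrite !l2normE; have [vp|] := ltP 0 (dot v v); first by rewrite ltr_sqrt.
move=> v0; have -> : dot v v = 0 by apply/eqP; rewrite eq_le v0 dot_ge0.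
by rewrite sqrtr0 !ltNge sqrtr_ge0 dot_ge0.
Qed.

Lemma l2normZ a u : l2norm (a *: u) = `|a| * l2norm u.
Proof.
by rewrite !l2normE dotZl dotZr mulrA -expr2 sqrtrM ?sqr_ge0 // sqrtr_sqr.
Qed.

Lemma vor_iff x l l' : (l2norm (x - l) < l2norm (x - l')) =
  (2 * dot (x - l) (l' - l) < dot (l' - l) (l' - l)).
Proof.
have -> : x - l' = (x - l) - (l' - l) by rewrite opprB addrA subrK.
rewrite l2norm_lt (dot_sqB (x - l)) -subr_gt0 -[X in _ = X]subr_gt0.
by congr (0 < _); ring.
Qed.

Lemma packing_sep (L : set 'rV[R]_d) eps l l' : 0 < eps -> eps = packing_radius L ->
  L l -> L l' -> l <> l' -> 2 * eps <= l2norm (l' - l).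
Proof.
move=> e0 eE Ll Ll' nll; rewrite leNgt; apply/negP => hn.
set S := [set r : R | 0 <= r /\ forall l l', L l -> L l' -> l <> l' ->
        forall x, ~ (l2norm (x - l) < r /\ l2norm (x - l') < r)].
have hS : has_sup S.
  apply: contrapT => /sup_out hs; move: e0; rewrite eE /packing_radius -/S hs.
  by rewrite ltxx.
set n := l2norm (l' - l).
have hn2 : n < 2 * eps := hn.
have ep : 0 < eps - n / 2 by lra.
have [s [s0 Ss] hs] := sup_adherent ep hS.
rewrite -/S -[sup S]/(packing_radius L) -eE in hs.
apply: (Ss l l' Ll Ll' nll (l + (2^-1) *: (l' - l))).
have -> : l + 2^-1 *: (l' - l) - l = 2^-1 *: (l' - l) by rewrite addrC addKr.
have -> : l + 2^-1 *: (l' - l) - l' = (- 2^-1) *: (l' - l).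
  by apply/matrixP => i j; rewrite !mxE; field.
rewrite !l2normZ normrN -/n ger0_norm ?invr_ge0 //; lra.
Qed.

Definition hmap (c : R) l x : 'rV[R]_d := l + c *: (x - l).

Lemma box_vol_h c l a b : 0 < c ->
  box_vol (hmap c l a) (hmap c l b) = c ^+ d * box_vol a b.
Proof.
move=> c0; rewrite /box_vol.
have -> : c ^+ d = \prod_(i < d) c by rewrite prodr_const card_ord.
rewrite -big_split; apply: eq_bigr => i _ /=; rewrite !mxE.
have -> : l ord0 i + c * (b ord0 i - l ord0 i) - (l ord0 i + c * (a ord0 i - l ord0 i))
  = c * (b ord0 i - a ord0 i) by ring.
by rewrite -[X in Num.max _ X](mulr0 c) -maxr_pMr // ltW.
Qed.

Lemma box_vol_ge0 (a b : 'rV[R]_d) : 0 <= box_vol a b.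
Proof. by apply: prodr_ge0 => i _; rewrite le_max lexx orbT. Qed.

Lemma vol_scale (c : R) l (A A' : set 'rV[R]_d) : 0 < c ->
  (forall x, A' x -> A (l + c^-1 *: (x - l))) ->
  (lebesgue_vol A' <= (c ^+ d)%:E * lebesgue_vol A)%E.
Proof.
move=> c0 hA.
have cd : 0 < c ^+ d by rewrite exprn_gt0.
rewrite -lee_pdivrMl //; apply: le_ereal_inf_tmp => s [a [b [cov ->]]].
rewrite lee_pdivrMl //.
apply: ereal_inf_lbound; exists (fun k => hmap c l (a k)), (fun k => hmap c l (b k)).
split.
  move=> x /hA /cov [k _ hk]; exists k => // i.
  have [h1 h2] := andP (hk i); move: h1 h2; rewrite /hmap !mxE.
  set z := l ord0 i + c^-1 * (x ord0 i - l ord0 i).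
  have xe : x ord0 i = l ord0 i + c * (z - l ord0 i).
    by rewrite /z; field; rewrite gt_eqF.
  move=> h1 h2; rewrite xe !lerD2l ltrD2l ler_pM2l // ltr_pM2l // lerD2r ltrD2r.
  by rewrite h1 h2.
rewrite -nneseriesZl; last by move=> k _; rewrite lee_fin box_vol_ge0.
by apply: eq_eseriesr => k _; rewrite -EFinM box_vol_h.
Qed.

End Aux.

Theorem lemma30 (R : realType) (d : nat) (B : 'M[R]_d) (eps q : R) :
  B \in unitmx -> 0 < eps -> 0 < q ->
  eps_lattice eps (lattice B) ->
  forall l : 'rV[R]_d, lattice B l ->
  (lebesgue_vol (Vor_plus (lattice B) (2 * q * eps) l)
     <= ((1 + 2 * q) ^+ d)%:E * lebesgue_vol (Vor (lattice B) l))%E.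
Proof.
move=> _ e0 q0 [eE _] l Ll.
have c0 : 0 < 1 + 2 * q by lra.
apply: (vol_scale (l:=l)) => // x [y Vy hxy] l' Ll' nl.
rewrite vor_iff; have := Vy l' Ll' nl; rewrite vor_iff.
set a := l' - l.
have sep := packing_sep e0 eE Ll Ll' (nesym nl); rewrite -/a in sep.
have CS := cauchy_schwarz (x - y) a.
have na0 := l2norm_ge0 a; have nxy0 := l2norm_ge0 (x - y).
have aa : dot a a = l2norm a ^+ 2 by rewrite l2norm_sq.
have h2 : 2 * dot (x - y) a <= 2 * q * dot a a.
  rewrite aa; apply: (le_trans (ler_wpM2l _ CS)) => //.
  have : l2norm (x - y) * l2norm a <= 2 * q * eps * l2norm a by rewrite ler_wpM2r.
  have : 0 <= q * l2norm a * (l2norm a - 2 * eps).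
    by rewrite mulr_ge0 ?subr_ge0 // mulr_ge0 // ltW.
  nra.

have -> : l + (1 + 2 * q)^-1 *: (x - l) - l = (1 + 2 * q)^-1 *: ((y - l) + (x - y)).
  by rewrite addrC addKr [y - l + _]addrC addrA subrK.
rewrite dotZl dotDl => h1.
rewrite mulrCA ltr_pdivrMl //.
move: h1 h2; set A1 := dot (y - l) a; set A2 := dot (x - y) a; set D := dot a a.
move=> h1 h2; clear -h1 h2.
have -> : (1 + 2 * q) * D = D + 2 * q * D by ring.
lra.
Qed.
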